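(* Let $V=\coprod_{n\in\mathbb{Z}}V_{(n)}$ be a $\mathbb{Z}$-graded vertex algebra, $W=\coprod_{n\in\mathbb{N}}W_{(n)}$ an $\mathbb{N}$-graded vector space and $Y_W:V\otimes W\to W((x))$ a linear map, $Y_W(u,x)=\sum_nu_nx^{-n-1}$, such that $u_n$ maps $W_{(j)}$ into $W_{(j+m-n-1)}$ for $u\in V_{(m)}$. Assume that for all homogeneous $u,v\in V$, homogeneous $w\in W$ and $p,q\in\mathbb{Z}$ with $q<k:=\mathrm{wt}\,v+\deg w$, setting $l=\mathrm{wt}\,u+\deg w$, $$\mathrm{Res}_{x_0}\mathrm{Res}_{x_2}(x_0+x_2)^px_2^qY_W(u,x_0+x_2)Y_W(v,x_2)w=\mathrm{Res}_{x_0}\mathrm{Res}_{x_2}\Big(\sum_{i=0}^{k-q-1}\tbinom{p-l}{i}x_0^{p-l-i}x_2^i\Big)x_2^q(x_0+x_2)^lY_W(Y(u,x_0)v,x_2)w.$$ Then for all $u,v\in V$, homogeneous $w\in W$ and $p',q'\in\mathbb{Z}$ with $q'<\deg w$, $$\mathrm{Res}_{x_1}\mathrm{Res}_{x_2}x_1^{p'}x_2^{q'}Y_W(x_1^{L(0)}u,x_1)Y_W(x_2^{L(0)}v,x_2)w=\mathrm{Res}_{x_0}\mathrm{Res}_{x_2}\,Q(x_0,x_2)\,x_2^{q'}(x_0+x_2)^{\deg w}Y_W(Y((x_0+x_2)^{L(0)}u,x_0)x_2^{L(0)}v,x_2)w,$$ where $Q(x_0,x_2)=\sum_{i=0}^{\deg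 w-q'-1}\binom{p'-\deg w}{i}x_0^{p'-\deg w-i}x_2^i$.
   Context: A $\mathbb{Z}$-graded vertex algebra is a vertex algebra $(V,Y,\mathbf{1})$ with $V=\coprod_{n\in\mathbb{Z}}V_{(n)}$ and $[d,Y(u,x)]=x\frac{d}{dx}Y(u,x)+Y(du,x)$ where $du=nu$ for $u\in V_{(n)}$; $\mathrm{wt}\,u=n$ for $u\in V_{(n)}$, and $L(0)=d$, so $x^{L(0)}u=x^{\mathrm{wt}\,u}u$ for homogeneous $u$ (extended linearly). For $w\in W_{(n)}$, $\deg w=n$. Expressions $(x_0+x_2)^n$ and $Y_W(u,x_0+x_2)$ are expanded in nonnegative powers of $x_2$. *)

(* Defs.v *)
From HB Require Import structures.
From mathcomp Require Import all_boot all_order all_algebra.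
From Stdlib Require Import ClassicalEpsilon.
Set Implicit Arguments. Unset Strict Implicit. Unset Printing Implicit Defensive.
Import Order.TTheory GRing.Theory Num.Theory.
Local Open Scope ring_scope.

(* Finite-support sums over nat and int.  The value is the genuine sum *)
(* whenever the family has finite support (the only case in which it   *)
(* is used meaningfully); otherwise it is some unspecified partial sum. *)
Section FinSums.
Variable M : zmodType.

Definition finsuppN (f : nat -> M) : Prop :=
  exists N : nat, forall n : nat, (N <= n)%N -> f n = 0.
Definition finsuppZ (f : int -> M) : Prop :=
  exists N : nat, forall n : int, (N <= `|n|)%N -> f n = 0.

Definition fsumN (f : nat -> M) : M :=
  let N := epsilon (inhabits 0%N)
             (fun N : nat => forall n : nat, (N <= n)%N -> f n = 0) in
  \sum_(i < N) f i.
Definition fsumZ (f : int -> M) : M :=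
  let N := epsilon (inhabits 0%N)
             (fun N : nat => forall n : int, (N <= `|n|)%N -> f n = 0) in
  \sum_(i < 2 * N) f (i%:Z - N%:Z).
End FinSums.

(* binom(-(k+1), j) = (-1)^j binom(k+j, j).                            *)
Definition binZ (n : int) (j : nat) : int :=
  match n with
  | Posz k => ('C(k, j))%:Z
  | Negz k => (-1) ^+ j * ('C(k + j, j))%:Z
  end.

(* Gradings, given by the family of projections onto the homogeneous   *)
(* subspaces of a direct sum decomposition.                            *)
Definition linearP (K : fieldType) (A B : lmodType K) (f : A -> B) : Prop :=
  forall (a : K) (x y : A), f (a *: x + y) = a *: f x + f y.

Definition is_Zgrading (K : fieldType) (V : lmodType K) (pr : int -> V -> V) :=
  [/\ forall n, linearP (pr n),
      forall n m v, pr n (pr m v) = if n == m then pr n v else 0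
    & forall v, finsuppZ (fun n => pr n v) /\ v = fsumZ (fun n => pr n v)].

Definition is_Ngrading (K : fieldType) (W : lmodType K) (prW : nat -> W -> W) :=
  [/\ forall n, linearP (prW n),
      forall n m w, prW n (prW m w) = if n == m then prW n w else 0
    & forall w, finsuppN (fun n => prW n w) /\ w = fsumN (fun n => prW n w)].

Definition homV (K : fieldType) (V : lmodType K) (pr : int -> V -> V) (m : int) (v : V) :=
  pr m v = v.
Definition homW (K : fieldType) (W : lmodType K) (prW : nat -> W -> W) (n : nat) (w : W) :=
  prW n w = w.
Definition homWz (K : fieldType) (W : lmodType K) (prW : nat -> W -> W) (z : int) (w : W) :=
  match z with Posz n => homW prW n w | Negz _ => w = 0 end.

(* grading operator d = L(0):  d v = sum_n n v_(n) *)
Definition dop (K : fieldType) (V : lmodType K) (pr : int -> V -> V) (v : V) : V :=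
  fsumZ (fun n => pr n v *~ n).

(* Z-graded vertex algebra.  Y u n v = u_n v, i.e. Y(u,x)v = sum u_n v x^{-n-1}. *)
(* The Jacobi identity is stated in its component (Borcherds) form.     *)
Definition is_ZVA (K : fieldType) (V : lmodType K) (vac : V)
    (Y : V -> int -> V -> V) (pr : int -> V -> V) : Prop :=
  [/\
      (forall n v, linearP (fun u => Y u n v)) /\ (forall u n, linearP (Y u n)),
      (forall u v, exists N : int, forall n, N <= n -> Y u n v = 0),
      (forall n v, Y vac n v = if n == -1 then v else 0),
      (forall v, (forall n, 0 <= n -> Y v n vac = 0) /\ Y v (-1) vac = v)
    &
      (forall u v w (p q r : int),
        fsumN (fun i => Y (Y u (r + i%:Z) v) (p + q - i%:Z) w *~ binZ p i)
        = fsumN (fun i => (Y u (p + r - i%:Z) (Y v (q + i%:Z) w)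
                           - Y v (q + r - i%:Z) (Y u (p + i%:Z) w) *~ ((-1) ^+ `|r|%N))
                          *~ ((-1) ^+ i * binZ r i))) /\
      is_Zgrading pr /\
      (* [d, Y(u,x)] = x d/dx Y(u,x) + Y(du,x), componentwise *)
      (forall u v n, dop pr (Y u n v) - Y u n (dop pr v)
                     = Y u n v *~ (- n - 1) + Y (dop pr u) n v)].

Definition is_YW (K : fieldType) (V W : lmodType K) (pr : int -> V -> V)
    (prW : nat -> W -> W) (YW : V -> int -> W -> W) : Prop :=
  [/\ (forall n w, linearP (fun u => YW u n w)) /\ (forall u n, linearP (YW u n)),
      (forall u w, exists N : int, forall n, N <= n -> YW u n w = 0)
    & (forall (m : int) (j : nat) u w n, homV pr m u -> homW prW j w ->
         homWz prW (j%:Z + m - n - 1) (YW u n w))].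

(* Formal series.  A two-variable series F : ser2 M stands for          *)
(*   sum_{a,b in Z} F a b  x_A^a x_B^b,                                 *)
(* a one-variable series G : int -> M for sum_b G b x^b.               *)
(* (x_0+x_2)^n is always expanded in nonnegative powers of x_2.        *)
Definition ser2 (M : Type) := int -> int -> M.

Definition Res2 (M : Type) (F : ser2 M) : M := F (-1) (-1).

Definition mono (M : Type) (e0 e2 : int) (F : ser2 M) : ser2 M :=
  fun a b => F (a - e0) (b - e2).

Definition polymul (M : zmodType) (N : nat) (c e0 e2 : nat -> int) (F : ser2 M) : ser2 M :=
  fun a b => \sum_(i < N) F (a - e0 i) (b - e2 i) *~ c i.

(* (x_0+x_2)^n F = sum_{j>=0} binom(n,j) x_0^{n-j} x_2^j F *)
Definition binmul (M : zmodType) (n : int) (F : ser2 M) : ser2 M :=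
  fun a b => fsumN (fun j => F (a - n + j%:Z) (b - j%:Z) *~ binZ n j).
Definition binmul_ok (M : zmodType) (n : int) (F : ser2 M) : Prop :=
  forall a b, finsuppN (fun j => F (a - n + j%:Z) (b - j%:Z) *~ binZ n j).

Definition cst1 (M : zmodType) (v : M) : int -> M := fun b => if b == 0 then v else 0.
Definition cst2 (M : zmodType) (v : M) : ser2 M :=
  fun a b => if (a == 0) && (b == 0) then v else 0.

(* x^{L(0)} v = sum_n x^n v_(n) *)
Definition Lpow1 (K : fieldType) (V : lmodType K) (pr : int -> V -> V) (v : V) : int -> V :=
  fun n => pr n v.
(* (x_0+x_2)^{L(0)} u = sum_r (x_0+x_2)^r u_(r) = sum_r sum_{j>=0} binom(r,j) x_0^{r-j} x_2^j u_(r) *)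
Definition Lpow2 (K : fieldType) (V : lmodType K) (pr : int -> V -> V) (u : V) : ser2 V :=
  fun a b => match b with
             | Posz j => pr (a + b) u *~ binZ (a + b) j
             | Negz _ => 0
             end.

(* Y(G(x_0,x_2), x_0) H(x_2) *)
Definition Yser (K : fieldType) (V : lmodType K) (Y : V -> int -> V -> V)
    (G : ser2 V) (H : int -> V) : ser2 V :=
  fun a b => fsumZ (fun b1 => fsumZ (fun a1 => Y (G a1 b1) (a1 - a - 1) (H (b - b1)))).

(* Y_W(G(x_A,x_2), x_2) w *)
Definition YWser (K : fieldType) (V W : lmodType K) (YW : V -> int -> W -> W)
    (G : ser2 V) (w : W) : ser2 W :=
  fun a c => fsumZ (fun b => YW (G a b) (b - c - 1) w).
Definition YWser_ok (K : fieldType) (V W : lmodType K) (YW : V -> int -> W -> W)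
    (G : ser2 V) (w : W) : Prop :=
  forall a c, finsuppZ (fun b => YW (G a b) (b - c - 1) w).

(* Y_W(G(x_2), x_2) w, one variable *)
Definition YWser1 (K : fieldType) (V W : lmodType K) (YW : V -> int -> W -> W)
    (G : int -> V) (w : W) : int -> W :=
  fun c => fsumZ (fun b => YW (G b) (b - c - 1) w).

(* Y_W(u, x_0+x_2) F(x_2), (x_0+x_2)^{-m-1} expanded in nonneg powers of x_2:
   coefficient of x_0^a x_2^b is sum_{j>=0} binom(a+j,j) u_{-a-1-j} F_{b-j} *)
Definition YW_shift (K : fieldType) (V W : lmodType K) (YW : V -> int -> W -> W)
    (u : V) (F : int -> W) : ser2 W :=
  fun a b => fsumN (fun j => YW u (- a - 1 - j%:Z) (F (b - j%:Z)) *~ binZ (a + j%:Z) j).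

(* Y_W(G(x_1), x_1) F(x_2) *)
Definition YW_x1 (K : fieldType) (V W : lmodType K) (YW : V -> int -> W -> W)
    (G : int -> V) (F : int -> W) : ser2 W :=
  fun a b => fsumZ (fun c => YW (G c) (c - a - 1) (F b)).

(* Main.v *)
Require Import Defs.
From HB Require Import structures.
From mathcomp Require Import all_boot all_order all_algebra.
From mathcomp Require Import ring zify.
From Stdlib Require Import ClassicalEpsilon FunctionalExtensionality.
Set Implicit Arguments. Unset Strict Implicit. Unset Printing Implicit Defensive.
Import Order.TTheory GRing.Theory Num.Theory.
Local Open Scope ring_scope.



Section Gen.
Variable M : zmodType.

Lemma sum_supp_eq (I : eqType) (f : I -> M) s1 s2 : uniq s1 -> uniq s2 ->
  (forall n, n \notin s1 -> f n = 0) -> (forall n, n \notin s2 -> f n = 0) ->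
  \sum_(n <- s1) f n = \sum_(n <- s2) f n.
Proof.
move=> u1 u2 h1 h2.
have key: forall s t : seq I, (forall n, n \notin t -> f n = 0) ->
    \sum_(n <- s) f n = \sum_(n <- [seq x <- s | x \in t]) f n.
  move=> s t Ht; rewrite big_filter [RHS]big_mkcond /=; apply: eq_bigr => n _ /=.
  by case: ifP => // /negbT /Ht ->.
rewrite (key s1 s2) // (key s2 s1) //; apply: perm_big; apply: uniq_perm;
  rewrite ?filter_uniq // => x; by rewrite !mem_filter andbC.
Qed.

Lemma le_sum_mem (s : seq int) n : n \in s -> (`|n| <= \sum_(m <- s) `|m|)%N.
Proof.
move=> ns; rewrite (perm_big _ (perm_to_rem ns)) big_cons; exact: leq_addr.
Qed.

Lemma fsumZ_seq (f : int -> M) s : uniq s -> (forall n, n \notin s -> f n = 0) ->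
  fsumZ f = \sum_(n <- s) f n.
Proof.
move=> us hs; rewrite /fsumZ.
set P := (fun N : nat => forall n : int, (N <= `|n|)%N -> f n = 0).
have hP : P (epsilon (inhabits 0%N) P).
  apply: epsilon_spec; exists (\sum_(m <- s) `|m|).+1 => n hn; apply: hs.
  apply/negP => /le_sum_mem h; by rewrite ltnNge h in hn.
move: hP; set N0 := epsilon _ _ => hP.
rewrite -(big_mkord xpredT (fun i : nat => f (i%:Z - N0%:Z))) /index_iota subn0.
rewrite -(big_map (fun i : nat => i%:Z - N0%:Z) xpredT f).
apply: sum_supp_eq => //.
- rewrite map_inj_uniq ?iota_uniq // => x y H; lia.
- move=> n nn; apply: hP; rewrite leqNgt; apply/negP => hlt; move/negP: nn; apply.
  apply/mapP; exists (absz (n + N0%:Z)); first by rewrite mem_iota; lia.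
  lia.
Qed.

Lemma fsumN_seq (f : nat -> M) s : uniq s -> (forall n, n \notin s -> f n = 0) ->
  fsumN f = \sum_(n <- s) f n.
Proof.
move=> us hs; rewrite /fsumN.
set P := (fun N : nat => forall n : nat, (N <= n)%N -> f n = 0).
have hP : P (epsilon (inhabits 0%N) P).
  apply: epsilon_spec; exists (\sum_(m <- s) m).+1 => n hn; apply: hs.
  apply/negP => ns; move: hn; by rewrite (perm_big _ (perm_to_rem ns)) big_cons ltnNge leq_addr.
move: hP; set N0 := epsilon _ _ => hP.
rewrite -(big_mkord xpredT f) /index_iota subn0.
apply: sum_supp_eq => //; first exact: iota_uniq.
move=> n nn; apply: hP; rewrite leqNgt; apply/negP => hlt; move/negP: nn; apply.
by rewrite mem_iota.
Qed.

Lemma fsumN_ge (f : nat -> M) L : (forall n, (L <= n)%N -> f n = 0) ->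
  fsumN f = \sum_(i < L) f i.
Proof.
move=> h; rewrite (@fsumN_seq f (iota 0 L)) ?iota_uniq //.
  by rewrite -(big_mkord xpredT f) /index_iota subn0.
move=> n; rewrite mem_iota => hn; apply: h; lia.
Qed.


Lemma eq_fsumZ (f g : int -> M) : (forall n, f n = g n) -> fsumZ f = fsumZ g.
Proof. by move=> h; rewrite (functional_extensionality f g h). Qed.
Lemma eq_fsumN (f g : nat -> M) : (forall n, f n = g n) -> fsumN f = fsumN g.
Proof. by move=> h; rewrite (functional_extensionality f g h). Qed.
Lemma eq_finsuppZ (f g : int -> M) : (forall n, f n = g n) -> finsuppZ f = finsuppZ g.
Proof. by move=> h; rewrite (functional_extensionality f g h). Qed.
Lemma eq_finsuppN (f g : nat -> M) : (forall n, f n = g n) -> finsuppN f = finsuppN g.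
Proof. by move=> h; rewrite (functional_extensionality f g h). Qed.

Definition suppZ (f : int -> M) (s : seq int) := forall n, n \notin s -> f n = 0.
Definition suppN (f : nat -> M) (s : seq nat) := forall n, n \notin s -> f n = 0.

Lemma finsuppZ_seq f : finsuppZ f -> exists s, uniq s /\ suppZ f s.
Proof.
case=> N hN; exists [seq (i%:Z - N%:Z) | i <- iota 0 (2*N)]; split.
  rewrite map_inj_uniq ?iota_uniq // => x y H; lia.
move=> n nn; apply: hN; rewrite leqNgt; apply/negP => hlt; move/negP: nn; apply.
apply/mapP; exists (absz (n + N%:Z)); first by rewrite mem_iota; lia.
lia.
Qed.

Lemma seq_finsuppZ f s : suppZ f s -> finsuppZ f.
Proof.
move=> hs; exists (\sum_(m <- s) `|m|).+1 => n hn; apply: hs.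
apply/negP => /le_sum_mem h; by rewrite ltnNge h in hn.
Qed.

Lemma finsuppN_seq f : finsuppN f -> exists s, uniq s /\ suppN f s.
Proof.
case=> N hN; exists (iota 0 N); split; first exact: iota_uniq.
move=> n; rewrite mem_iota => hn; apply: hN; lia.
Qed.

Lemma seq_finsuppN f s : suppN f s -> finsuppN f.
Proof.
move=> hs; exists (\sum_(m <- s) m).+1 => n hn; apply: hs.
apply/negP => ns; move: hn; by rewrite (perm_big _ (perm_to_rem ns)) big_cons ltnNge leq_addr.
Qed.

Lemma fsumZ_suppZ f s : suppZ f s -> fsumZ f = \sum_(n <- undup s) f n.
Proof.
move=> hs; apply: fsumZ_seq; first exact: undup_uniq.
by move=> n; rewrite mem_undup; apply: hs.
Qed.

Lemma fsumN_suppN f s : suppN f s -> fsumN f = \sum_(n <- undup s) f n.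
Proof.
move=> hs; apply: fsumN_seq; first exact: undup_uniq.
by move=> n; rewrite mem_undup; apply: hs.
Qed.

Lemma fsumZ_delta (f : int -> M) a : (forall n, n != a -> f n = 0) -> fsumZ f = f a.
Proof.
move=> h; rewrite (@fsumZ_seq f [:: a]) ?big_seq1 //.
by move=> n; rewrite inE; apply: h.
Qed.

Lemma finsuppZ_delta (f : int -> M) a : (forall n, n != a -> f n = 0) -> finsuppZ f.
Proof. move=> h; apply: (@seq_finsuppZ f [:: a]) => n; rewrite inE; exact: h. Qed.

Lemma fsumZ_add (f g : int -> M) : finsuppZ f -> finsuppZ g ->
  fsumZ (fun n => f n + g n) = fsumZ f + fsumZ g.
Proof.
move=> /finsuppZ_seq [s1 [_ h1]] /finsuppZ_seq [s2 [_ h2]].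
have H1 : suppZ f (s1 ++ s2) by move=> n; rewrite mem_cat negb_or => /andP[/h1].
have H2 : suppZ g (s1 ++ s2) by move=> n; rewrite mem_cat negb_or => /andP[_ /h2].
have H3 : suppZ (fun n => f n + g n) (s1 ++ s2) by move=> n hn; rewrite H1 // H2 // addr0.
by rewrite (fsumZ_suppZ H1) (fsumZ_suppZ H2) (fsumZ_suppZ H3) big_split.
Qed.

Lemma finsuppZ_add (f g : int -> M) : finsuppZ f -> finsuppZ g -> finsuppZ (fun n => f n + g n).
Proof.
move=> /finsuppZ_seq [s1 [_ h1]] /finsuppZ_seq [s2 [_ h2]].
apply: (@seq_finsuppZ _ (s1 ++ s2)) => n; rewrite mem_cat negb_or => /andP[/h1 -> /h2 ->].
by rewrite addr0.
Qed.

Lemma fsumZ0 : fsumZ (fun _ : int => (0 : M)) = 0.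
Proof. by rewrite (@fsumZ_seq _ [::]) ?big_nil. Qed.

Lemma finsuppZ0 : finsuppZ (fun _ : int => (0 : M)).
Proof. by exists 0%N. Qed.

Lemma fsumZ_sum (I : Type) (r : seq I) (F : I -> int -> M) :
  (forall i, finsuppZ (F i)) ->
  fsumZ (fun n => \sum_(i <- r) F i n) = \sum_(i <- r) fsumZ (F i).
Proof.
move=> hF; have hS : forall r', finsuppZ (fun n => \sum_(i <- r') F i n).
  elim=> [|i r' IH]; first by under eq_finsuppZ do rewrite big_nil; exact: finsuppZ0.
  under eq_finsuppZ do rewrite big_cons; exact: finsuppZ_add.
elim: r => [|i r IH]; first by under eq_fsumZ do rewrite big_nil; rewrite fsumZ0 big_nil.
under eq_fsumZ do rewrite big_cons; by rewrite fsumZ_add // IH big_cons.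
Qed.

Lemma fsumZ_zero (f : int -> M) : (forall n, f n = 0) -> fsumZ f = 0.
Proof. by move=> h; rewrite (@fsumZ_seq _ [::]) ?big_nil. Qed.

Lemma finsuppZ_sum (I : Type) (r : seq I) (F : I -> int -> M) :
  (forall i, finsuppZ (F i)) -> finsuppZ (fun n => \sum_(i <- r) F i n).
Proof.
move=> hF; elim: r => [|i r' IH]; first by under eq_finsuppZ do rewrite big_nil; exact: finsuppZ0.
under eq_finsuppZ do rewrite big_cons; exact: finsuppZ_add.
Qed.

Lemma fsumZ_shiftN (f : int -> M) s0 : finsuppZ f -> (forall n, n < s0 -> f n = 0) ->
  fsumZ f = fsumN (fun k => f (s0 + k%:Z)).
Proof.
move=> /finsuppZ_seq [s [us hs]] hlt.
set sf := [seq n <- s | s0 <= n].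
have hsf : suppZ f sf.
  move=> n; rewrite mem_filter negb_and; case/orP; last exact: hs.
  by rewrite -ltNge; apply: hlt.
rewrite (fsumZ_seq (s := sf)) ?filter_uniq //.
rewrite (fsumN_seq (s := [seq absz (n - s0) | n <- sf])); last first.
- move=> k hk; apply: hsf; apply/negP => hin; move/negP: hk; apply.
  by apply/mapP; exists (s0 + k%:Z) => //; lia.
- rewrite map_inj_in_uniq ?filter_uniq // => x y.
  rewrite !mem_filter => /andP[hx _] /andP[hy _] E; lia.
rewrite big_map; apply: eq_big_seq => n; rewrite mem_filter => /andP[hn _].
congr f; lia.
Qed.

End Gen.


Lemma binZ0 n : binZ n 0 = 1.
Proof. by case: n => k /=; rewrite bin0 // expr0 mul1r. Qed.

Lemma binZ_pascal n j : binZ (n + 1) j.+1 = binZ n j.+1 + binZ n j.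
Proof.
case: n => [k|k].
  rewrite (_ : Posz k + 1 = Posz k.+1); last by rewrite -addn1.
  by rewrite /= binS PoszD.
case: k => [|k].
  rewrite (_ : Negz 0 + 1 = Posz 0) //= bin0n add0n !binn /=.
  by rewrite exprS; ring.
rewrite (_ : Negz k.+1 + 1 = Negz k); last by rewrite NegzE; lia.
rewrite /= (_ : (k.+1 + j.+1 = (k + j.+1).+1)%N); last by lia.
rewrite binS (_ : (k.+1 + j = k + j.+1)%N); last by lia.
rewrite PoszD exprS; ring.
Qed.

Definition SV (a b : int) (m : nat) := \sum_(j < m.+1) binZ a j * binZ b (m - j).

Lemma SV0 a b : SV a b 0 = 1.
Proof. by rewrite /SV big_ord1 subn0 !binZ0 mul1r. Qed.

Lemma SV_step a b m : SV a (b + 1) m.+1 = SV a b m.+1 + SV a b m.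
Proof.
rewrite /SV big_ord_recr /= subnn binZ0.
rewrite [X in _ = X + _]big_ord_recr /= subnn binZ0.
have -> : \sum_(i < m.+1) binZ a i * binZ (b + 1) (m.+1 - i)
   = \sum_(i < m.+1) binZ a i * binZ b (m.+1 - i) + \sum_(i < m.+1) binZ a i * binZ b (m - i).
  rewrite -big_split /=; apply: eq_bigr => i _.
  have hi : (m.+1 - i = (m - i).+1)%N by have := ltn_ord i; lia.
  by rewrite hi binZ_pascal mulrDr.
ring.
Qed.

Lemma vandermonde a b m : SV a b m = binZ (a + b) m.
Proof.
elim/int_rec: b m => [|n IH|n IH] m.
- rewrite addr0 /SV big_ord_recr /= subnn bin0 mulr1 big1 ?add0r // => i _.
  have hi : (m - i = (m - i).-1.+1)%N by have := ltn_ord i; lia.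
  by rewrite hi bin0n /= mulr0.
- case: m => [|m]; first by rewrite SV0 binZ0.
  rewrite (_ : Posz n.+1 = n%:Z + 1); last by rewrite -addn1.
  by rewrite SV_step !IH addrA binZ_pascal.
- elim: m => [|m IHm]; first by rewrite SV0 binZ0.
  have E : SV a (- n.+1%:Z) m.+1 = SV a (- n.+1%:Z + 1) m.+1 - SV a (- n.+1%:Z) m.
    by rewrite SV_step; ring.
  rewrite E IHm (_ : - n.+1%:Z + 1 = - n%:Z); last by lia.
  rewrite IH (_ : a + - n%:Z = (a + - n.+1%:Z) + 1); last by lia.
  by rewrite binZ_pascal; ring.
Qed.


Section Conv.
Variable M : zmodType.

Lemma sum_widen (F : nat -> M) n n' : (n <= n')%N ->
  (forall i, (n <= i)%N -> (i < n')%N -> F i = 0) ->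
  \sum_(i < n) F i = \sum_(i < n') F i.
Proof.
move=> le h; rewrite (big_ord_widen _ _ le) big_mkcond /=; apply: eq_bigr => i _.
case: ifP => // /negbT; rewrite -leqNgt => hi; by rewrite h.
Qed.

Lemma sum_shift (G : nat -> M) j L N : (j + L <= N)%N ->
  (forall k, (L <= k)%N -> G k = 0) ->
  \sum_(k < L) G k = \sum_(m < N) (if (j <= m)%N then G (m - j)%N else 0).
Proof.
move=> hN hG.
rewrite -(big_mkord xpredT (fun m => if (j <= m)%N then G (m - j)%N else 0)).
rewrite (@big_cat_nat _ _ _ j) //=; last by lia.
rewrite [X in _ = X + _]big1_seq ?add0r; last first.
  move=> i /andP[_]; rewrite mem_index_iota => /andP[_ hi].
  by rewrite leqNgt hi.
rewrite -{1}(add0n j) big_addn.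
rewrite (eq_big_nat _ _ (F2 := G)); last by move=> i _; rewrite leq_addl addnK.
rewrite big_mkord; apply: sum_widen; first by lia.
by move=> i hi _; apply: hG.
Qed.

Lemma conv (A L : nat) (F : nat -> M) (c : nat -> nat -> int) :
  (forall j k, (j < A)%N -> (L <= k)%N -> F (k + j)%N *~ c j k = 0) ->
  \sum_(j < A) \sum_(k < L) F (k + j)%N *~ c j k
  = \sum_(m < A + L) F m *~ (\sum_(j < A) (if (j <= m)%N then c j (m - j)%N else 0)).
Proof.
move=> h.
rewrite [RHS](eq_bigr _ (fun m _ => mulrz_sumr _ _ _ _)).
rewrite [RHS]exchange_big /=; apply: eq_bigr => j _.
rewrite (@sum_shift (fun k => F (k + j)%N *~ c j k) j L (A + L)); last first.
- by move=> k hk; apply: h.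
- have := ltn_ord j; lia.
apply: eq_bigr => m _; case: ifP => hjm; last by rewrite mulr0z.
by rewrite subnK.
Qed.

End Conv.


Section Lin.
Variables (K : fieldType) (A B : lmodType K) (f : A -> B).
Hypothesis hf : Defs.linearP f.
Lemma lin0 : f 0 = 0.
Proof. have h := hf 1 0 0; rewrite !scale1r addr0 in h; apply: (addrI (f 0)); by rewrite addr0 -h. Qed.
Lemma linD x y : f (x + y) = f x + f y.
Proof. by have := hf 1 x y; rewrite !scale1r. Qed.
Lemma linMz x z : f (x *~ z) = f x *~ z.
Proof. by have := hf z%:~R x 0; rewrite addr0 lin0 addr0 !scaler_int. Qed.
Lemma lin_sum (I : Type) (r : seq I) (F : I -> A) :
  f (\sum_(i <- r) F i) = \sum_(i <- r) f (F i).
Proof. elim: r => [|i r IH]; by rewrite ?big_nil ?lin0 // !big_cons linD IH. Qed.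
Lemma fsumZ_lin (F : int -> A) : finsuppZ F -> fsumZ (fun n => f (F n)) = f (fsumZ F).
Proof.
move=> /finsuppZ_seq [s [us hs]].
rewrite (fsumZ_seq us hs) (@fsumZ_seq _ (fun n => f (F n)) s us) ?lin_sum //.
by move=> n /hs ->; rewrite lin0.
Qed.
Lemma finsuppZ_lin (F : int -> A) : finsuppZ F -> finsuppZ (fun n => f (F n)).
Proof.
move=> /finsuppZ_seq [s [us hs]]; apply: (@seq_finsuppZ _ _ s) => n /hs ->.
exact: lin0.
Qed.
End Lin.

Section Main.
Variables (K : fieldType) (V W : lmodType K) (Y : V -> int -> V -> V) (pr : int -> V -> V)
  (YW : V -> int -> W -> W).
Hypothesis charK : [pchar K] =i pred0.
Hypothesis HYl : forall n v, Defs.linearP (fun u => Y u n v).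
Hypothesis HYr : forall u n, Defs.linearP (Y u n).
Hypothesis HWl : forall n w, Defs.linearP (fun u => YW u n w).
Hypothesis HWr : forall u n, Defs.linearP (YW u n).
Hypothesis HWt : forall u w, exists N : int, forall n, N <= n -> YW u n w = 0.
Hypothesis Hpl : forall n, Defs.linearP (pr n).
Hypothesis Hpo : forall n m v, pr n (pr m v) = if n == m then pr n v else 0.
Hypothesis Hpf : forall v, finsuppZ (fun n => pr n v).

Lemma YWser1_cst v w c : YWser1 YW (cst1 v) w c = YW v (- c - 1) w.
Proof.
rewrite /YWser1 (@fsumZ_delta _ _ 0) /cst1 ?eqxx ?sub0r // => n /negbTE ->.
exact: (lin0 (HWl _ _)).
Qed.

Lemma coefL p m N : (m < N)%N ->
  \sum_(j < N) (if (j <= m)%N then binZ p j * binZ ((m - j + j)%N%:Z - p - 1) (m - j) else 0)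
  = if m == 0%N then 1 else 0.
Proof.
move=> hmN; rewrite -(@sum_widen _ (fun j : nat => if (j <= m)%N then binZ p j * binZ ((m - j + j)%N%:Z - p - 1) (m - j) else 0) m.+1 N) //; last first.
  by move=> i hi _; rewrite leqNgt hi.
transitivity (SV p (m%:Z - p - 1) m).
  by apply: eq_bigr => j _; rewrite -ltnS ltn_ord subnK // -ltnS.
rewrite vandermonde (_ : p + (m%:Z - p - 1) = m%:Z - 1); last by ring.
case: m {hmN} => [|m] //=; by rewrite subn1 bin_small.
Qed.

Lemma LHSeval u v w p q :
  Res2 (binmul p (mono 0 q (YW_shift YW u (YWser1 YW (cst1 v) w)))) = YW u p (YW v q w).
Proof.
rewrite /Res2 /binmul /mono /YW_shift.
have [T hT] := HWt v w.
set Mb := absz (T - q).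
set g := fun m : nat => YW u (p - m%:Z) (YW v (q + m%:Z) w).
have hg : forall m, (Mb <= m)%N -> g m = 0.
  move=> m hm; rewrite /g hT ?(lin0 (HWr _ _)) //; lia.
transitivity (fsumN (fun j : nat => (fsumN (fun i : nat =>
     g (i + j)%N *~ binZ ((i + j)%N%:Z - p - 1) i)) *~ binZ p j)).
  apply: eq_fsumN => j; congr (_ *~ _); apply: eq_fsumN => i.
  rewrite YWser1_cst /g; congr (YW u _ (YW v _ w) *~ binZ _ _); rewrite PoszD; ring.
rewrite (@fsumN_ge _ _ Mb); last first.
  move=> j hj; rewrite (@fsumN_ge _ _ 0) ?big_ord0 ?mul0rz // => i _.
  by rewrite hg ?mul0rz //; lia.
transitivity (\sum_(j < Mb) \sum_(i < Mb) g (i + j)%N *~ (binZ p j * binZ ((i + j)%N%:Z - p - 1) i)).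
  apply: eq_bigr => j _; rewrite (@fsumN_ge _ _ Mb) ?mulrz_suml.
    by apply: eq_bigr => i _; rewrite mulrzA_C.
  by move=> i hi; rewrite hg ?mul0rz //; lia.
rewrite (@conv _ Mb Mb g (fun j k => binZ p j * binZ ((k + j)%N%:Z - p - 1) k)); last first.
  by move=> j k _ hk; rewrite hg ?mul0rz //; lia.
have g0 : g 0%N = YW u p (YW v q w) by rewrite /g subr0 addr0.
rewrite -g0; case E: Mb hg => [|Mb'] hg.
  by rewrite big_ord0 hg.
rewrite big_ord_recl /= coefL //= big1 ?addr0 // => i _.
case: (ltnP i.+1 Mb'.+1) => hi.
  by rewrite /bump /= coefL.
by rewrite /bump /= hg ?mul0rz.
Qed.

Lemma intr_neq0 (z : int) : z != 0 -> (z%:~R : K) != 0.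
Proof.
have h := (pcharf0P K).1 charK.
case: z => n hz; first by rewrite -pmulrn h; apply: contra hz => /eqP ->.
by rewrite NegzE mulrNz -pmulrn oppr_eq0 h.
Qed.

Lemma mulrz_eq0W (x : W) z : z != 0 -> x *~ z = 0 -> x = 0.
Proof.
move=> hz; rewrite -scaler_int => /eqP; rewrite scaler_eq0 (negbTE (intr_neq0 hz)) /=.
by move/eqP.
Qed.

Lemma binZ_neg_neq0 r k : r < 0 -> binZ r k != 0.
Proof.
case: r => // n _ /=; rewrite mulf_eq0 negb_or signr_eq0 /=.
by rewrite eqz_nat -lt0n bin_gt0 leq_addl.
Qed.

Lemma Gpiece r s u v a b :
  Yser Y (Lpow2 pr (pr r u)) (Lpow1 pr (pr s v)) a b
  = match b - s with Posz k => Y (pr r u) (r - k%:Z - a - 1) (pr s v) *~ binZ r k | Negz _ => 0 end.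
Proof.
rewrite /Yser (@fsumZ_delta _ _ (b - s)); last first.
  move=> b1 hb1; apply: fsumZ_zero => a1; rewrite /Lpow1 Hpo.
  case: eqP => [E|_]; last by rewrite (lin0 (HYr _ _)).
  by move/eqP: hb1 => hb1; exfalso; apply: hb1; lia.
rewrite (_ : b - (b - s) = s); last by ring.
rewrite /Lpow1 Hpo eqxx.
case E: (b - s) => [k|k].
- rewrite (@fsumZ_delta _ _ (r - k%:Z)).
    rewrite /Lpow2 (_ : r - k%:Z + k%:Z = r); last by ring.
    by rewrite Hpo eqxx (linMz (HYl _ _)).
  move=> a1 ha1; rewrite /Lpow2 Hpo; case: eqP => [E2|_].
    by move/eqP: ha1 => ha1; exfalso; apply: ha1; lia.
  by rewrite mul0rz (lin0 (HYl _ _)).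
- by apply: fsumZ_zero => a1; rewrite /Lpow2 (lin0 (HYl _ _)).
Qed.

Lemma Gcst u v a b : Yser Y (cst2 u) (cst1 v) a b = if b == 0 then Y u (- a - 1) v else 0.
Proof.
rewrite /Yser (@fsumZ_delta _ _ b); last first.
  move=> b1 hb1; apply: fsumZ_zero => a1; rewrite /cst1.
  case: eqP => [E|_]; last by rewrite (lin0 (HYr _ _)).
  by move/eqP: hb1 => hb1; exfalso; apply: hb1; lia.
rewrite subrr /cst1 eqxx (@fsumZ_delta _ _ 0).
  by rewrite /cst2 eqxx /= sub0r; case: eqP => // _; exact: (lin0 (HYl _ _)).
move=> a1 /negbTE ha1; by rewrite /cst2 ha1 /= (lin0 (HYl _ _)).
Qed.

Lemma binZ_pos_small z j : 0 <= z -> (absz z < j)%N -> binZ z j = 0.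
Proof. by case: z => // n _ /= h; rewrite bin_small. Qed.

Lemma binZ_nat_small (d j : nat) : (d < j)%N -> binZ d j = 0.
Proof. by move=> h /=; rewrite bin_small. Qed.

Lemma coefR (d : nat) r m :
  \sum_(j < d.+1) (if (j <= m)%N then binZ d j * binZ r (m - j) else 0) = binZ (r + d%:Z) m.
Proof.
rewrite addrC -vandermonde /SV.
rewrite (@sum_widen _ (fun j : nat => if (j <= m)%N then binZ d j * binZ r (m - j) else 0) d.+1 (d.+1 + m)); last first.
- by move=> i hi _; case: ifP => // _; rewrite binZ_nat_small ?mul0r.
- by rewrite leq_addr.
transitivity (\sum_(j < m.+1) (fun j : nat => if (j <= m)%N then binZ d j * binZ r (m - j) else 0) j); last first.
  by apply: eq_bigr => j _; rewrite /= -ltnS ltn_ord.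
rewrite [in RHS](@sum_widen _ (fun j : nat => if (j <= m)%N then binZ d j * binZ r (m - j) else 0) m.+1 (d.+1 + m)) //.
- by lia.
- by move=> i hi _; rewrite leqNgt hi.
Qed.

Definition pieceok r s u v w :=
  YWser_ok YW (Yser Y (Lpow2 pr (pr r u)) (Lpow1 pr (pr s v))) w.

Lemma Hpiece r s u v w a c : pieceok r s u v w ->
  YWser YW (Yser Y (Lpow2 pr (pr r u)) (Lpow1 pr (pr s v))) w a c
  = fsumN (fun k => YW (Y (pr r u) (r - k%:Z - a - 1) (pr s v)) (s + k%:Z - c - 1) w *~ binZ r k).
Proof.
move=> hok; rewrite /YWser (fsumZ_shiftN (s0 := s)) //.
- apply: eq_fsumN => k; rewrite Gpiece (_ : s + k%:Z - s = k%:Z) /=; last by ring.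
  by rewrite (linMz (HWl _ _)).
- move=> n hn; rewrite Gpiece; case E: (n - s) => [k|k]; first by lia.
  exact: (lin0 (HWl _ _)).
Qed.

Lemma Fin r s u v w : pieceok r s u v w -> r < 0 -> forall a c, exists M : nat,
  forall k, (M <= k)%N -> YW (Y (pr r u) (r - k%:Z - a - 1) (pr s v)) (s + k%:Z - c - 1) w = 0.
Proof.
move=> hok hr a c; have [N hN] := hok a c; exists (N + absz s)%N => k hk.
apply: (mulrz_eq0W (binZ_neg_neq0 k hr)).
have := hN (s + k%:Z); rewrite Gpiece (_ : s + k%:Z - s = k%:Z) /=; last by ring.
rewrite (linMz (HWl _ _)) => -> //; lia.
Qed.

Lemma H0 u v w a c : YWser YW (Yser Y (cst2 u) (cst1 v)) w a c = YW (Y u (- a - 1) v) (- c - 1) w.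
Proof.
rewrite /YWser (@fsumZ_delta _ _ 0).
  by rewrite Gcst eqxx sub0r.
move=> b /negbTE hb; by rewrite Gcst hb (lin0 (HWl _ _)).
Qed.

Lemma binmul_ok_piece r s u v w (d : nat) : pieceok r s u v w ->
  binmul_ok (r + d%:Z) (YWser YW (Yser Y (cst2 (pr r u)) (cst1 (pr s v))) w).
Proof.
move=> hok a b; case: (ltP (r + d%:Z) 0) => hrd; last first.
  exists (absz (r + d%:Z)).+1 => j hj; rewrite binZ_pos_small ?mulr0z //.
have hr : r < 0 by lia.
have [M hM] := Fin hok hr (a - d%:Z) (s + b); exists M => j hj.
transitivity (YW (Y (pr r u) (r - j%:Z - (a - d%:Z) - 1) (pr s v)) (s + j%:Z - (s + b) - 1) w
   *~ binZ (r + d%:Z) j); last by rewrite hM ?mul0rz.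
by rewrite H0; congr (YW (Y _ _ _) _ _ *~ _); ring.
Qed.

Lemma piece_eq r s u v w (d : nat) al be be' : pieceok r s u v w -> be = be' + s ->
  binmul d%:Z (YWser YW (Yser Y (Lpow2 pr (pr r u)) (Lpow1 pr (pr s v))) w) al be
  = binmul (r + d%:Z) (YWser YW (Yser Y (cst2 (pr r u)) (cst1 (pr s v))) w) al be'.
Proof.
move=> hok Eb.
set g := fun m : nat => YW (Y (pr r u) (r + d%:Z - al - m%:Z - 1) (pr s v)) (m%:Z + s - be - 1) w.
have eR : binmul (r + d%:Z) (YWser YW (Yser Y (cst2 (pr r u)) (cst1 (pr s v))) w) al be'
    = fsumN (fun j => g j *~ binZ (r + d%:Z) j).
  rewrite /binmul; apply: eq_fsumN => j; rewrite H0 /g; congr (YW (Y _ _ _) _ _ *~ _); rewrite ?Eb; ring.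
have eL : binmul d%:Z (YWser YW (Yser Y (Lpow2 pr (pr r u)) (Lpow1 pr (pr s v))) w) al be
    = fsumN (fun j' => fsumN (fun k => g (k + j')%N *~ binZ r k) *~ binZ d j').
  rewrite /binmul; apply: eq_fsumN => j'; congr (_ *~ _); rewrite Hpiece //.
  apply: eq_fsumN => k; rewrite /g; congr (YW (Y _ _ _) _ _ *~ _); rewrite PoszD; ring.
have [L hL1 hL2] : exists2 L : nat,
   (forall j' k, (L <= k)%N -> g (k + j')%N *~ binZ r k = 0) &
   (forall m, (d.+1 + L <= m)%N -> g m *~ binZ (r + d%:Z) m = 0).
  case: (ltP r 0) => hr.
    have [M hM] := Fin hok hr (al - d%:Z) be.
    have hg : forall m, (M <= m)%N -> g m = 0.
      move=> m hm; rewrite -(hM m hm) /g; congr (YW (Y _ _ _) _ _); ring.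
    exists M.
      by move=> j' k hk; rewrite hg ?mul0rz //; lia.
    by move=> m hm; rewrite hg ?mul0rz //; lia.
  exists (absz r).+1.
    by move=> j' k hk; rewrite binZ_pos_small ?mulr0z.
  by move=> m hm; rewrite binZ_pos_small ?mulr0z //; lia.
rewrite eL eR (@fsumN_ge _ _ d.+1); last first.
  by move=> j hj; rewrite binZ_nat_small ?mulr0z.
rewrite (@fsumN_ge _ _ (d.+1 + L)) //.
transitivity (\sum_(j' < d.+1) \sum_(k < L) g (k + j')%N *~ (binZ d j' * binZ r k)).
  apply: eq_bigr => j' _; rewrite (@fsumN_ge _ _ L) ?mulrz_suml.
    by apply: eq_bigr => k _; rewrite mulrzA_C.
  by move=> k hk; rewrite hL1.
rewrite (@conv _ d.+1 L g (fun j k => binZ d j * binZ r k)); last by move=> j k _ hk; rewrite mulrC mulrzA hL1 // mul0rz.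
by apply: eq_bigr => m _; rewrite coefR.
Qed.

Lemma sum_delta (I : eqType) (M : zmodType) (R : seq I) (i : I) (x : M) : uniq R ->
  \sum_(r <- R) (if i == r then x else 0) = if i \in R then x else 0.
Proof.
move=> uR; case: ifP => iR.
  rewrite (perm_big _ (perm_to_rem iR)) big_cons eqxx.
  have -> : \sum_(r <- rem i R) (if i == r then x else 0) = 0.
    apply: big1_seq => r /andP[_ hr].
    case: eqP hr => // <-; by rewrite mem_rem_uniqF.
  exact: addr0.
rewrite big1_seq // => r /andP[_ hr]; case: eqP => // E; by rewrite E hr in iR.
Qed.

Lemma Y_suml (I : Type) (r : seq I) (F : I -> V) n v : Y (\sum_(i <- r) F i) n v = \sum_(i <- r) Y (F i) n v.
Proof. exact: (lin_sum (HYl n v)). Qed.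
Lemma Y_sumr (I : Type) (r : seq I) (F : I -> V) n u : Y u n (\sum_(i <- r) F i) = \sum_(i <- r) Y u n (F i).
Proof. exact: (lin_sum (HYr u n)). Qed.
Lemma YW_suml (I : Type) (r : seq I) (F : I -> V) n w : YW (\sum_(i <- r) F i) n w = \sum_(i <- r) YW (F i) n w.
Proof. exact: (lin_sum (HWl n w)). Qed.
Lemma YW_sumr (I : Type) (r : seq I) (F : I -> W) n u : YW u n (\sum_(i <- r) F i) = \sum_(i <- r) YW u n (F i).
Proof. exact: (lin_sum (HWr u n)). Qed.

Lemma L2dec u R : uniq R -> suppZ (pr^~ u) R -> forall a1 b1,
  Lpow2 pr u a1 b1 = \sum_(r <- R) Lpow2 pr (pr r u) a1 b1.
Proof.
move=> uR hR a1 [j|j] /=; last by rewrite big1.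
under eq_bigr do rewrite Hpo.
rewrite -mulrz_suml sum_delta //; case: ifP => // /negbT /hR ->; by rewrite mul0rz.
Qed.

Lemma L1dec v S : uniq S -> suppZ (pr^~ v) S -> forall t,
  Lpow1 pr v t = \sum_(s <- S) Lpow1 pr (pr s v) t.
Proof.
move=> uS hS t; rewrite /Lpow1; under eq_bigr do rewrite Hpo.
rewrite sum_delta //; case: ifP => // /negbT /hS ->; done.
Qed.

Lemma L2zero r u a1 b1 : a1 + b1 != r -> Lpow2 pr (pr r u) a1 b1 = 0.
Proof. by move=> h; rewrite /Lpow2; case: b1 h => // j h; rewrite Hpo (negbTE h) mul0rz. Qed.

Lemma Ydec u v R S : uniq R -> suppZ (pr^~ u) R -> uniq S -> suppZ (pr^~ v) S ->
  forall a b, Yser Y (Lpow2 pr u) (Lpow1 pr v) a b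
  = \sum_(r <- R) \sum_(s <- S) Yser Y (Lpow2 pr (pr r u)) (Lpow1 pr (pr s v)) a b.
Proof.
move=> uR hR uS hS a b; rewrite /Yser.
have fin1 : forall b1 r s, finsuppZ (fun a1 => Y (Lpow2 pr (pr r u) a1 b1) (a1 - a - 1) (Lpow1 pr (pr s v) (b - b1))).
  move=> b1 r s; apply: (finsuppZ_delta (a := r - b1)) => a1 h.
  rewrite L2zero ?(lin0 (HYl _ _)) //; apply: contra h => /eqP E; apply/eqP; lia.
transitivity (fsumZ (fun b1 => \sum_(r <- R) \sum_(s <- S)
   fsumZ (fun a1 => Y (Lpow2 pr (pr r u) a1 b1) (a1 - a - 1) (Lpow1 pr (pr s v) (b - b1))))).
  apply: eq_fsumZ => b1.
  transitivity (fsumZ (fun a1 => \sum_(r <- R) \sum_(s <- S)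
      Y (Lpow2 pr (pr r u) a1 b1) (a1 - a - 1) (Lpow1 pr (pr s v) (b - b1)))).
    apply: eq_fsumZ => a1; rewrite (L2dec uR hR) Y_suml; apply: eq_bigr => r _.
    by rewrite (L1dec uS hS) Y_sumr.
  rewrite fsumZ_sum; last by move=> r; apply: finsuppZ_sum => s; apply: fin1.
  by apply: eq_bigr => r _; rewrite fsumZ_sum.
have fin2 : forall r s, finsuppZ (fun b1 =>
    fsumZ (fun a1 => Y (Lpow2 pr (pr r u) a1 b1) (a1 - a - 1) (Lpow1 pr (pr s v) (b - b1)))).
  move=> r s; apply: (finsuppZ_delta (a := b - s)) => b1 h; apply: fsumZ_zero => a1.
  rewrite /Lpow1 Hpo; case: eqP => [E|_]; last exact: (lin0 (HYr _ _)).
  by move/eqP: h => h; exfalso; apply: h; lia.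
rewrite fsumZ_sum; last by move=> r; apply: finsuppZ_sum => s; apply: fin2.
by apply: eq_bigr => r _; rewrite fsumZ_sum.
Qed.

Lemma YWdec u v w R S : uniq R -> suppZ (pr^~ u) R -> uniq S -> suppZ (pr^~ v) S ->
  (forall r s, pieceok r s u v w) ->
  forall a c, YWser YW (Yser Y (Lpow2 pr u) (Lpow1 pr v)) w a c
  = \sum_(r <- R) \sum_(s <- S) YWser YW (Yser Y (Lpow2 pr (pr r u)) (Lpow1 pr (pr s v))) w a c.
Proof.
move=> uR hR uS hS hok a c; rewrite /YWser.
transitivity (fsumZ (fun b => \sum_(r <- R) \sum_(s <- S)
   YW (Yser Y (Lpow2 pr (pr r u)) (Lpow1 pr (pr s v)) a b) (b - c - 1) w)).
  apply: eq_fsumZ => b; rewrite (Ydec uR hR uS hS) YW_suml; apply: eq_bigr => r _.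
  by rewrite YW_suml.
rewrite fsumZ_sum; last by move=> r; apply: finsuppZ_sum => s; apply: hok.
by apply: eq_bigr => r _; rewrite fsumZ_sum // => s; apply: hok.
Qed.

Lemma Bdec u v w R S (d : nat) : uniq R -> suppZ (pr^~ u) R -> uniq S -> suppZ (pr^~ v) S ->
  (forall r s, pieceok r s u v w) ->
  forall al be, binmul d%:Z (YWser YW (Yser Y (Lpow2 pr u) (Lpow1 pr v)) w) al be
  = \sum_(r <- R) \sum_(s <- S) binmul d%:Z (YWser YW (Yser Y (Lpow2 pr (pr r u)) (Lpow1 pr (pr s v))) w) al be.
Proof.
move=> uR hR uS hS hok al be; rewrite /binmul.
have z : forall (F : nat -> W) j, (d.+1 <= j)%N -> F j *~ binZ d j = 0.
  by move=> F j hj; rewrite binZ_nat_small ?mulr0z.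
rewrite (@fsumN_ge _ _ d.+1); last by move=> j hj; rewrite binZ_nat_small ?mulr0z.
transitivity (\sum_(j < d.+1) \sum_(r <- R) \sum_(s <- S)
   YWser YW (Yser Y (Lpow2 pr (pr r u)) (Lpow1 pr (pr s v))) w (al - d%:Z + j%:Z) (be - j%:Z) *~ binZ d j).
  apply: eq_bigr => j _; rewrite (YWdec uR hR uS hS hok) mulrz_suml; apply: eq_bigr => r _.
  by rewrite mulrz_suml.
rewrite exchange_big; apply: eq_bigr => r _ /=; rewrite exchange_big; apply: eq_bigr => s _ /=.
by rewrite (@fsumN_ge _ _ d.+1) // => j hj /=; rewrite bin_small // mulr0z.
Qed.

Lemma LHSdec u v w p' q' R S : uniq R -> suppZ (pr^~ u) R -> uniq S -> suppZ (pr^~ v) S ->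
  Res2 (mono p' q' (YW_x1 YW (Lpow1 pr u) (YWser1 YW (Lpow1 pr v) w)))
  = \sum_(r <- R) \sum_(s <- S) YW (pr r u) (r + p') (YW (pr s v) (s + q') w).
Proof.
move=> uR hR uS hS; rewrite /Res2 /mono /YW_x1 /YWser1 /Lpow1.
rewrite (fsumZ_seq (s := R)) //; last by move=> n /hR ->; exact: (lin0 (HWl _ _)).
apply: eq_bigr => r _.
rewrite (fsumZ_seq (s := S)) //; last by move=> n /hS ->; exact: (lin0 (HWl _ _)).
rewrite YW_sumr; apply: eq_bigr => s _; congr (YW _ _ (YW _ _ w)); ring.
Qed.

Variable prW : nat -> W -> W.

Lemma main_sec
  (hyp : forall (m s : int) (d : nat) (u v : V) (w : W) (p q : int),
     homV pr m u -> homV pr s v -> homW prW d w -> q < s + d%:Z ->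
     binmul_ok (m + d%:Z) (YWser YW (Yser Y (cst2 u) (cst1 v)) w) ->
     Res2 (binmul p (mono 0 q (YW_shift YW u (YWser1 YW (cst1 v) w))))
     = Res2 (polymul (absz (s + d%:Z - q)%R)
               (fun i => binZ (p - (m + d%:Z)) i)
               (fun i => p - (m + d%:Z) - i%:Z) (fun i => i%:Z)
               (mono 0 q (binmul (m + d%:Z) (YWser YW (Yser Y (cst2 u) (cst1 v)) w)))))
  (u v : V) (d : nat) (w : W) (p' q' : int) :
    homW prW d w -> q' < d%:Z ->
    (forall r s : int, YWser_ok YW (Yser Y (Lpow2 pr (pr r u)) (Lpow1 pr (pr s v))) w) ->
    Res2 (mono p' q' (YW_x1 YW (Lpow1 pr u) (YWser1 YW (Lpow1 pr v) w)))
    = Res2 (polymul (absz (d%:Z - q')%R)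
              (fun i => binZ (p' - d%:Z) i)
              (fun i => p' - d%:Z - i%:Z) (fun i => i%:Z)
              (mono 0 q' (binmul d%:Z (YWser YW (Yser Y (Lpow2 pr u) (Lpow1 pr v)) w)))).
Proof.
move=> hw hq hok.
have [R [uR hR]] := finsuppZ_seq (Hpf u).
have [S [uS hS]] := finsuppZ_seq (Hpf v).
rewrite (LHSdec _ _ _ uR hR uS hS).
transitivity (\sum_(r <- R) \sum_(s <- S) \sum_(i < absz (d%:Z - q'))
   binmul d%:Z (YWser YW (Yser Y (Lpow2 pr (pr r u)) (Lpow1 pr (pr s v))) w)
     (-1 - (p' - d%:Z - i%:Z) - 0) (-1 - i%:Z - q') *~ binZ (p' - d%:Z) i).
  apply: eq_bigr => r _; apply: eq_bigr => s _.
  have h := hyp r s d (pr r u) (pr s v) w (r + p') (s + q').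
  rewrite /homV !Hpo !eqxx LHSeval in h.
  rewrite h //; try (by lia); try (by apply: binmul_ok_piece; apply: hok).
  rewrite /Res2 /polymul /mono.
  rewrite (_ : r + p' - (r + d%:Z) = p' - d%:Z); last by ring.
  rewrite (_ : s + d%:Z - (s + q') = d%:Z - q'); last by ring.
  apply: eq_bigr => i _; congr (_ *~ _); symmetry; apply: piece_eq; first exact: hok.
  ring.
rewrite /Res2 /polymul /mono; symmetry.
transitivity (\sum_(i < absz (d%:Z - q')) \sum_(r <- R) \sum_(s <- S)
   binmul d%:Z (YWser YW (Yser Y (Lpow2 pr (pr r u)) (Lpow1 pr (pr s v))) w)
     (-1 - (p' - d%:Z - i%:Z) - 0) (-1 - i%:Z - q') *~ binZ (p' - d%:Z) i).
  apply: eq_bigr => i _; rewrite (Bdec d uR hR uS hS hok) mulrz_suml; apply: eq_bigr => r _.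
  by rewrite mulrz_suml.
rewrite exchange_big; apply: eq_bigr => r _ /=; by rewrite exchange_big.
Qed.

End Main.

Theorem lemma5p1 (K : fieldType) (charK : [pchar K] =i pred0)
  (V W : lmodType K) (vac : V) (Y : V -> int -> V -> V) (pr : int -> V -> V)
  (prW : nat -> W -> W) (YW : V -> int -> W -> W) :
  is_ZVA vac Y pr -> is_Ngrading prW -> is_YW pr prW YW ->
  (* hypothesis: for homogeneous u in V_(m), v in V_(s), w in W_(d), q < k := s + d,
     with l := m + d *)
  (forall (m s : int) (d : nat) (u v : V) (w : W) (p q : int),
     homV pr m u -> homV pr s v -> homW prW d w -> q < s + d%:Z ->
     binmul_ok (m + d%:Z) (YWser YW (Yser Y (cst2 u) (cst1 v)) w) ->
     Res2 (binmul p (mono 0 q (YW_shift YW u (YWser1 YW (cst1 v) w))))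
     = Res2 (polymul (absz (s + d%:Z - q)%R)
               (fun i => binZ (p - (m + d%:Z)) i)
               (fun i => p - (m + d%:Z) - i%:Z) (fun i => i%:Z)
               (mono 0 q (binmul (m + d%:Z) (YWser YW (Yser Y (cst2 u) (cst1 v)) w))))) ->
  (* conclusion *)
  forall (u v : V) (d : nat) (w : W) (p' q' : int),
    homW prW d w -> q' < d%:Z ->
    (forall r s : int, YWser_ok YW (Yser Y (Lpow2 pr (pr r u)) (Lpow1 pr (pr s v))) w) ->
    Res2 (mono p' q' (YW_x1 YW (Lpow1 pr u) (YWser1 YW (Lpow1 pr v) w)))
    = Res2 (polymul (absz (d%:Z - q')%R)
              (fun i => binZ (p' - d%:Z) i)
              (fun i => p' - d%:Z - i%:Z) (fun i => i%:Z)
              (mono 0 q' (binmul d%:Z (YWser YW (Yser Y (Lpow2 pr u) (Lpow1 pr v)) w)))).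

Proof.
move=> [[HYl HYr] _ _ _ [_ [[Hpl Hpo Hpf'] _]]] _ [[HWl HWr] HWt _] hyp u v d w p' q' hw hq hok.
have Hpf : forall v, finsuppZ (fun n => pr n v) by move=> x; case: (Hpf' x).
by apply: (main_sec charK HYl HYr HWl HWr HWt Hpo Hpf hyp).
Qed.
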